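(* Let $k\ge3$ and let $B$ be a bipartite graph with left vertex set $I$ and right vertex set $J$, left-regular of degree $k$ and with right degree $O(k)$. The graph $G=G(B)$ (constructed explicitly from $B$ as described in the context) has $O(k^4|I|)$ vertices and maximum vertex degree $O(k^2)$, and $G$ is $k$-colourable if and only if it is possible to map the pigeons $I$ to holes in $J$, each pigeon $i$ to a hole in $J_i$, in a one-to-one fashion, i.e., if and only if the equations $$\sum_{j\in J_i} p_{i,j}=1\ (i\in I),\qquad p_{i,j}p_{i,j'}=0\ (i\in I,\ j\neq j'\in J_i),\qquad p_{i,j}p_{i',j}=0\ (i\neq i'\in I,\ j\in J_i\cap J_{i'})$$ are simultaneously satisfiable over $\{0,1\}$.
   Context: $J_i$ is the set of $k$ neighbours of pigeon $i$ in $B$. Construction: for each pigeon $i$ fix an enumeration of its $k$ edges by $1,\dots,k$. For every pair of distinct pigeons $i\ne i'$ and $c,c'\in[k]$ such that the $c$th edge of $i$ and the $c'$th edge of $i'$ lead to the same hole, add a gadget: two disjoint $k$-cliques $l_1,\dots,l_k$ and $r_1,\dots,r_k$; edge $\{i,l_1\}$; a new vertex pre-coloured $c$ adjacent to $l_2,\dots,l_{k-1}$; edge $\{i',r_1\}$; a new vertex pre-coloured $c'$ adjacent to $r_2,\dots,r_{k-1}$; if $c=c'$ add edge $\{l_k,r_k\}$, otherwise identify $l_k$ with $r_k$. Pigeon vertices are shared among gadgets, all other vertices are new. Call the union $\widehat{G}$. Then take new vertices $z_1,\dots,z_M$ with $M=O(k^3|I|)$ large enough, and make every set of $k$ consecutive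 vertices $\{z_t,\dots,z_{t+k-1}\}$ a $k$-clique. Process the pre-coloured vertices of $\widehat{G}$ one by one: a vertex pre-coloured $c$ is identified with the first vertex $z_t$ with $t\equiv c \pmod k$ not yet used. The resulting graph, with no pre-colouring, is $G(B)$. $k$-colourable means having a map to $[k]$ with distinct colours on the endpoints of every edge. *)

(* Defs.v *)
From mathcomp Require Import all_boot.
Set Implicit Arguments. Unset Strict Implicit. Unset Printing Implicit Defensive.

(* The bipartite graph B: pigeons 'I_n, holes 'I_m; pigeon i has exactly k
   neighbours, enumerated (the fixed enumeration of its edges) by nb i : 'I_k -> 'I_m,
   which is required to be injective.  Colours / edge labels [k] are 'I_k
   (0-indexed: label c+1 of the paper is c here). *)

Definition Jset {n m k : nat} (nb : 'I_n -> 'I_k -> 'I_m) (i : 'I_n) : {set 'I_m} :=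
  [set nb i c | c : 'I_k].

(* gadget indices: (i,c,i',c') with i < i' (one gadget per unordered pair of
   distinct pigeons) such that the c-th edge of i and the c'-th edge of i'
   lead to the same hole *)
Definition gad_pred {n m k : nat} (nb : 'I_n -> 'I_k -> 'I_m)
    (g : ('I_n * 'I_k) * ('I_n * 'I_k)) : bool :=
  (g.1.1 < g.2.1) && (nb g.1.1 g.1.2 == nb g.2.1 g.2.2).

Definition gadget {n m k : nat} (nb : 'I_n -> 'I_k -> 'I_m) :=
  {g : ('I_n * 'I_k) * ('I_n * 'I_k) | gad_pred nb g}.

Section Acc.
Context {n m k : nat} {nb : 'I_n -> 'I_k -> 'I_m}.
Definition gi (g : gadget nb) : 'I_n := (val g).1.1.
Definition gc (g : gadget nb) : 'I_k := (val g).1.2.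
Definition gi' (g : gadget nb) : 'I_n := (val g).2.1.
Definition gc' (g : gadget nb) : 'I_k := (val g).2.2.
End Acc.

Definition pre_t {n m k : nat} (nb : 'I_n -> 'I_k -> 'I_m) := (gadget nb * bool)%type.

Definition pre_col {n m k : nat} {nb : 'I_n -> 'I_k -> 'I_m} (p : pre_t nb) : 'I_k :=
  if p.2 then gc' p.1 else gc p.1.

(* number M of chain vertices z_1..z_M (z_t is represented by t-1 : 'I_M):
   k times the number of pre-coloured vertices, so that every residue class
   mod k contains enough z's *)
Definition zM {n m k : nat} (nb : 'I_n -> 'I_k -> 'I_m) : nat :=
  k * #|{: pre_t nb}|.

(* raw vertices (before identifications):
   inl (inl i)            pigeon i
   inl (inr (g,false,a))  l_(a+1) of gadget g
   inl (inr (g,true,a))   r_(a+1) of gadget g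
   inr (inl p)            pre-coloured vertex p
   inr (inr t)            z_(t+1) *)
Definition raw_t {n m k : nat} (nb : 'I_n -> 'I_k -> 'I_m) :=
  (('I_n + (gadget nb * bool * 'I_k)) + (pre_t nb + 'I_(zM nb)))%type.

Definition rawE0 {n m k : nat} {nb : 'I_n -> 'I_k -> 'I_m} (x y : raw_t nb) : bool :=
  match x, y with
  | inl (inr (g, s, a)), inl (inr (g2, s2, b)) =>
      (g == g2) &&
      (((s == s2) && (a != b))                       (* the two k-cliques *)
       || [&& s != s2, gc g == gc' g,                (* edge {l_k, r_k} if c = c' *)
              val a == k.-1 & val b == k.-1])
  | inl (inl i), inl (inr (g, s, a)) =>               (* {i,l_1}, {i',r_1} *)
      (val a == 0) && (i == if s then gi' g else gi g)
  | inr (inl (g, s)), inl (inr (g2, s2, a)) =>        (* pre-coloured vertex to l_2..l_(k-1) *)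
      [&& g == g2, s == s2 & 0 < val a < k.-1]
  | inr (inr t), inr (inr t') =>                      (* chain: windows of k consecutive z's *)
      (t != t') &&
      [exists s : 'I_(zM nb), [&& s + k <= zM nb, s <= minn t t' & maxn t t' < s + k]]
  | _, _ => false
  end.

Definition rawE {n m k : nat} {nb : 'I_n -> 'I_k -> 'I_m} (x y : raw_t nb) : bool :=
  rawE0 x y || rawE0 y x.

(* identifications: r_k := l_k when c <> c'; pre-coloured p := z_(sigma p) *)
Definition rep {n m k : nat} {nb : 'I_n -> 'I_k -> 'I_m}
    (sigma : pre_t nb -> 'I_(zM nb)) (x : raw_t nb) : raw_t nb :=
  match x with
  | inl (inr (g, true, a)) =>
      if (gc g != gc' g) && (val a == k.-1) then inl (inr (g, false, a)) else x
  | inr (inl p) => inr (inr (sigma p))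
  | _ => x
  end.

(* the graph G(B): vertex set = classes of the identification (represented by
   their representatives), adjacency = image of the raw edges *)
Definition GV {n m k : nat} {nb : 'I_n -> 'I_k -> 'I_m}
    (sigma : pre_t nb -> 'I_(zM nb)) : {set raw_t nb} :=
  [set rep sigma x | x : raw_t nb].

Definition Gadj {n m k : nat} {nb : 'I_n -> 'I_k -> 'I_m}
    (sigma : pre_t nb -> 'I_(zM nb)) (x y : raw_t nb) : bool :=
  [exists a, exists b, [&& rawE a b, rep sigma a == x & rep sigma b == y]].

Definition Gdeg {n m k : nat} {nb : 'I_n -> 'I_k -> 'I_m}
    (sigma : pre_t nb -> 'I_(zM nb)) (x : raw_t nb) : nat :=
  #|[set y in GV sigma | Gadj sigma x y]|.

Definition G_colourable {n m k : nat} {nb : 'I_n -> 'I_k -> 'I_m}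
    (sigma : pre_t nb -> 'I_(zM nb)) : Prop :=
  exists f : raw_t nb -> 'I_k,
    forall x y, x \in GV sigma -> y \in GV sigma -> Gadj sigma x y -> f x != f y.

Definition php_map {n m k : nat} (nb : 'I_n -> 'I_k -> 'I_m) : Prop :=
  exists h : 'I_n -> 'I_m, (forall i, h i \in Jset nb i) /\ injective h.

Definition php_eqs {n m k : nat} (nb : 'I_n -> 'I_k -> 'I_m) : Prop :=
  exists p : 'I_n -> 'I_m -> bool,
    [/\ forall i, \sum_(j in Jset nb i) (p i j : nat) = 1,
        forall i j j', j \in Jset nb i -> j' \in Jset nb i -> j != j' ->
          (p i j : nat) * p i j' = 0
      & forall i i' j, i != i' -> j \in Jset nb i -> j \in Jset nb i' ->
          (p i j : nat) * p i' j = 0].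

(* Main.v *)
Require Import Defs.
From mathcomp Require Import all_boot zify.
Set Implicit Arguments. Unset Strict Implicit. Unset Printing Implicit Defensive.

Lemma card_pairs (T1 T2 : finType) (P : T1 -> T2 -> bool) :
  #|[set x : T1 * T2 | P x.1 x.2]| = \sum_(a : T1) #|[set b | P a b]|.
Proof.
transitivity (\sum_(x : T1*T2) (P x.1 x.2 : nat)).
  by rewrite -sum1_card big_mkcond /=; apply: eq_bigr => x _; rewrite inE; case: P.
rewrite -(pair_big xpredT xpredT (fun a b => (P a b : nat))) /=.
apply: eq_bigr => a _; symmetry; rewrite -sum1_card big_mkcond /=; apply: eq_bigr => b _.
by rewrite inE; case: P.
Qed.

Lemma mod_close (a b k : nat) : a < b -> b < a + k -> a %% k != b %% k.
Proof.
move=> ab ba; rewrite -(subnKC (ltnW ab)).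
have hd : 0 < b - a < k by lia.
move: hd; set dd := b - a => hd.
apply/negP; rewrite -{1}[a]addn0 eqn_modDl mod0n modn_small; lia.
Qed.

Section Main.
Variables (d k n m : nat) (nb : 'I_n -> 'I_k -> 'I_m).
Hypothesis hk : 3 <= k.
Hypothesis nbinj : forall i, injective (nb i).
Hypothesis hdeg : forall j : 'I_m, #|[set i | j \in Jset nb i]| <= d * k.
Variable sigma : pre_t nb -> 'I_(zM nb).
Hypothesis sinj : injective sigma.
Hypothesis smod : forall p, val (sigma p) = val (pre_col p) %[mod k].

Definition pig i : raw_t nb := inl (inl i).
Definition lr g s a : raw_t nb := inl (inr (g, s, a)).
Definition pv p : raw_t nb := inr (inl p).
Definition zv t : raw_t nb := inr (inr t).

Lemma kpos : 0 < k. Proof. by apply: leq_trans hk. Qed.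
Definition x0 : 'I_k := Ordinal kpos.
Lemma km1P : k.-1 < k. Proof. by case: k hk. Qed.
Definition km1 : 'I_k := Ordinal km1P.

Lemma gadP (g : gadget nb) : gi g < gi' g /\ nb (gi g) (gc g) = nb (gi' g) (gc' g).
Proof. rewrite /gi /gc /gi' /gc'; case: g => [[[i c] [i' c']] /andP [h1 /eqP h2]] /=; by split. Qed.

Lemma gad_inj1 (g1 g2 : gadget nb) : gi g1 = gi g2 -> gc g1 = gc g2 -> gi' g1 = gi' g2 -> g1 = g2.
Proof.
move=> e1 e2 e3; apply: val_inj.
have [_ h1] := gadP g1; have [_ h2] := gadP g2.
have e4 : gc' g1 = gc' g2.
  apply: (nbinj (i := gi' g1)); by rewrite -h1 e3 -h2 e1 e2.
move: e1 e2 e3 e4; rewrite /gi /gc /gi' /gc'; clear h1 h2.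
by case: g1 g2 => [[[? ?] [? ?]] ?] [[[? ?] [? ?]] ?] /= -> -> -> ->.
Qed.

Lemma gad_inj2 (g1 g2 : gadget nb) : gi' g1 = gi' g2 -> gc' g1 = gc' g2 -> gi g1 = gi g2 -> g1 = g2.
Proof.
move=> e1 e2 e3; apply: gad_inj1 => //.
have [_ h1] := gadP g1; have [_ h2] := gadP g2.
apply: (nbinj (i := gi g1)); by rewrite h1 e3 h2 e1 e2.
Qed.


Definition Sset (i : 'I_n) := [set x : 'I_k * 'I_n | nb i x.1 \in Jset nb x.2].

Lemma card_Sset i : #|Sset i| <= k * (d * k).
Proof.
rewrite /Sset (card_pairs (fun (c : 'I_k) (i' : 'I_n) => nb i c \in Jset nb i')).
apply: (@leq_trans (\sum_(c : 'I_k) d * k)); first by apply: leq_sum => c _; exact: hdeg.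
by rewrite sum_nat_const card_ord.
Qed.

Lemma card_A i : #|[set g : gadget nb | gi g == i]| <= k * (d * k).
Proof.
apply: leq_trans (card_Sset i).
rewrite -(@card_in_imset _ _ (fun g : gadget nb => (gc g, gi' g))).
  apply: subset_leq_card; apply/subsetP => x /imsetP [g]; rewrite inE => /eqP <- ->.
  rewrite inE /= (proj2 (gadP g)); exact: imset_f.
move=> g1 g2; rewrite !inE => /eqP e1 /eqP e2 [e3 e4].
by apply: gad_inj1; rewrite // e1 e2.
Qed.

Lemma card_A' i : #|[set g : gadget nb | gi' g == i]| <= k * (d * k).
Proof.
apply: leq_trans (card_Sset i).
rewrite -(@card_in_imset _ _ (fun g : gadget nb => (gc' g, gi g))).
  apply: subset_leq_card; apply/subsetP => x /imsetP [g]; rewrite inE => /eqP <- ->.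
  rewrite inE /= -(proj2 (gadP g)); exact: imset_f.
move=> g1 g2; rewrite !inE => /eqP e1 /eqP e2 [e3 e4].
by apply: gad_inj2; rewrite // e1 e2.
Qed.

Lemma card_gad : #|{: gadget nb}| <= n * (k * (d * k)).
Proof.
apply: (@leq_trans #|[set x : 'I_n * ('I_k * 'I_n) | x.2 \in Sset x.1]|).
  rewrite -cardsT -(@card_imset _ _ (fun g : gadget nb => (gi g, (gc g, gi' g)))).
    apply: subset_leq_card; apply/subsetP => x /imsetP [g _ ->].
    by rewrite inE /Sset inE /= (proj2 (gadP g)); exact: imset_f.
  by move=> g1 g2 [e1 e2 e3]; apply: gad_inj1.
rewrite (card_pairs (fun i y => y \in Sset i)).
apply: (@leq_trans (\sum_(i : 'I_n) k * (d * k))); last by rewrite sum_nat_const card_ord.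
apply: leq_sum => i _; apply: leq_trans (card_Sset i); apply: subset_leq_card.
by apply/subsetP => y; rewrite inE.
Qed.


Lemma card_raw : #|{: raw_t nb}| <= (6 * d + 7) * k ^ 4 * n.
Proof.
rewrite /raw_t !card_sum !card_prod card_bool !card_ord /zM card_prod card_bool.
have hG := card_gad; set G := #|{: gadget nb}| in hG *.
have h1 : G * 2 * k + (G * 2 + k * (G * 2)) <= 6 * (k * G) by nia.
have h2 : k * G <= k * (n * (k * (d * k))) by rewrite leq_mul2l hG orbT.
have h3 : 1 <= k ^ 4 by rewrite expn_gt0 kpos.
have h4 : k ^ 4 = k * (k * (k * k)) by rewrite !expnS expn0 muln1.
rewrite h4 in h3 *; nia.
Qed.

Lemma card_GV : #|GV sigma| <= (6 * d + 7) * k ^ 4 * n.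
Proof. exact: leq_trans (max_card _) card_raw. Qed.


Definition partner (y : raw_t nb) : raw_t nb :=
  match y with
  | inl (inr (g, false, a)) => inl (inr (g, true, a))
  | inr (inr t) => if [pick p | sigma p == t] is Some p then inr (inl p) else y
  | _ => y
  end.

Lemma rep_fiber a y : rep sigma a = y -> a = y \/ a = partner y.
Proof.
case: a => [[i|[[g [|]] b]]|[p|t]] /=; try by move=> <-; left.
  by case: ifP => _ <-; [right | left].
move=> <-; right => /=; case: pickP => [p' /eqP /sinj -> //|/(_ p)].
by rewrite eqxx.
Qed.

Definition rN (a : raw_t nb) := [set b | rawE a b].
Definition Kmax := 2 * (k * (d * k)) + 2 * k + 4.

Lemma rN_pig i : #|rN (pig i)| <= Kmax.
Proof.
apply: (@leq_trans #|[set lr g false x0 | g in [set g : gadget nb | gi g == i]] :|: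
                     [set lr g true x0 | g in [set g : gadget nb | gi' g == i]]|).
  apply: subset_leq_card; apply/subsetP => b; rewrite inE.
  case: b => [[i'|[[g s] a]]|[[g2 s2]|t]] //; rewrite /rawE /= ?orbF; move=> /andP [/eqP a0 /eqP ->].
  have -> : a = x0 by apply: val_inj.
  case: s; rewrite inE; apply/orP; [right|left]; apply: imset_f; by rewrite inE.
apply: leq_trans (leq_card_setU _ _) _.
apply: leq_trans (leq_add (leq_imset_card _ _) (leq_imset_card _ _)) _.
rewrite /Kmax; have := card_A i; have := card_A' i; lia.
Qed.

Definition lrf g (x : (bool * 'I_k) + (bool * bool)) : raw_t nb :=
  match x with
  | inl (s', b) => lr g s' b
  | inr (u, v) => if u then (if v then pig (gi g) else pig (gi' g)) else pv (g, v)
  end.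

Lemma rN_lr g s a : #|rN (lr g s a)| <= Kmax.
Proof.
apply: (@leq_trans #|[set lrf g x | x : (bool * 'I_k) + (bool * bool)]|).
  apply: subset_leq_card; apply/subsetP => b; rewrite inE.
  case: b => [[i'|[[g2 s2] b]]|[[g2 s2]|t]] //; rewrite /rawE /=.
  - move=> /andP [_ /eqP ->]; apply/imsetP; exists (inr (true, ~~ s)) => //.
    by case: s.
  - case/orP => /andP [/eqP e _]; apply/imsetP; exists (inl (s2, b)) => //=; by rewrite ?e.
  - rewrite ?orbF => /and4P [/eqP -> /eqP -> _ _]; apply/imsetP; exists (inr (false, s)) => //.
apply: leq_trans (leq_imset_card _ _) _.
rewrite card_sum !card_prod !card_bool card_ord /Kmax; lia.
Qed.

Lemma rN_pv p : #|rN (pv p)| <= Kmax.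
Proof.
case: p => g s.
apply: (@leq_trans #|[set lr g s b | b : 'I_k]|).
  apply: subset_leq_card; apply/subsetP => b; rewrite inE.
  case: b => [[i'|[[g2 s2] b]]|[[g2 s2]|t]] //; rewrite /rawE /= ?orbF.
  by move=> /and3P [/eqP <- /eqP <- _]; apply: imset_f.
apply: leq_trans (leq_imset_card _ _) _.
rewrite card_ord /Kmax; lia.
Qed.

Lemma rN_zv t : #|rN (zv t)| <= Kmax.
Proof.
apply: (@leq_trans #|[set zv (insubd t (t + u - k)) | u : 'I_(2 * k)]|).
  apply: subset_leq_card; apply/subsetP => b; rewrite inE.
  case: b => [[i'|[[g2 s2] b]]|[[g2 s2]|t']] //; rewrite /rawE /=.
  have hc : forall u v : 'I_(zM nb), [exists s : 'I_(zM nb),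
        [&& s + k <= zM nb, s <= minn u v & maxn u v < s + k]] -> u < v + k /\ v < u + k.
    by move=> u v /existsP [s' /and3P [_ h1 h2]]; lia.
  case/orP => /andP [_ /hc [h1 h2]].
  - have hu : t' + k - t < 2 * k by lia.
    apply/imsetP; exists (Ordinal hu) => //=; congr (inr (inr _)); apply: val_inj.
    rewrite val_insubd /=; have -> : t + (t' + k - t) - k = t' by lia.
    by rewrite ltn_ord.
  - have hu : t' + k - t < 2 * k by lia.
    apply/imsetP; exists (Ordinal hu) => //=; congr (inr (inr _)); apply: val_inj.
    rewrite val_insubd /=; have -> : t + (t' + k - t) - k = t' by lia.
    by rewrite ltn_ord.
apply: leq_trans (leq_imset_card _ _) _.
rewrite card_ord /Kmax; lia.
Qed.


Lemma rN_le a : #|rN a| <= Kmax.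
Proof.
case: a => [[i|[[g s] a]]|[p|t]]; [exact: rN_pig | exact: rN_lr | exact: rN_pv | exact: rN_zv].
Qed.

Lemma Gdeg_le x : Gdeg sigma x <= (6 * d + 7) * k ^ 2.
Proof.
rewrite /Gdeg; apply: (@leq_trans #|rep sigma @: (rN x :|: rN (partner x))|).
  apply: subset_leq_card; apply/subsetP => y; rewrite inE.
  move=> /andP [_ /existsP [a /existsP [b /and3P [hab /eqP ha /eqP hb]]]].
  rewrite -hb; apply: imset_f; rewrite inE.
  by case: (rep_fiber ha) => <-; rewrite !inE hab ?orbT.
apply: leq_trans (leq_imset_card _ _) _.
apply: leq_trans (leq_card_setU _ _) _.
have := rN_le x; have := rN_le (partner x); rewrite /Kmax.
have h4 : k ^ 2 = k * k by rewrite !expnS expn0 muln1.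
rewrite h4; have := hk; nia.
Qed.


Lemma map_eqs : php_map nb <-> php_eqs nb.
Proof.
split.
  move=> [h [hJ hinj]]; exists (fun i j => h i == j); split.
  - move=> i; rewrite (bigD1 (h i)) //= eqxx big1 // => j /andP [_ hj].
    by rewrite eq_sym (negbTE hj).
  - move=> i j j' _ _ hjj' /=; have [e|ne] := eqVneq (h i) j.
      by rewrite e (negbTE hjj').
    by [].
  - move=> i i' j hii' _ _ /=; have [e|ne] := eqVneq (h i) j; last by [].
    have [e'|ne'] := eqVneq (h i') j; last by rewrite muln0.
    by move: hii'; rewrite (hinj i i') ?eqxx // e e'.
move=> [p [h1 _ h3]].
have hs : forall i, exists j, (j \in Jset nb i) && p i j.
  move=> i; case: (pickP (fun j => (j \in Jset nb i) && p i j)) => [j hj|none].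
    by exists j.
  move: (h1 i); rewrite big1 // => j hj; move: (none j); rewrite hj /=.
  by case: (p i j).
exists (fun i => odflt (nb i x0) [pick j | (j \in Jset nb i) && p i j]); split.
  move=> i; case: pickP => [j /andP [] //|none].
  by have [j hj] := hs i; move: (none j); rewrite hj.
have hp : forall i, p i (odflt (nb i x0) [pick j | (j \in Jset nb i) && p i j]) /\
                    (odflt (nb i x0) [pick j | (j \in Jset nb i) && p i j]) \in Jset nb i.
  move=> i; case: pickP => [j /andP [] //|none].
  by have [j hj] := hs i; move: (none j); rewrite hj.
move=> i i' e; apply/eqP; apply/negP => /negP hii'.
have [pi ji] := hp i; have [pi' ji'] := hp i'.
move: (h3 i i' _ hii' ji); rewrite e => /(_ ji').
by move: pi pi'; rewrite e => -> ->.
Qed.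


Definition sw (a b x : 'I_k) : 'I_k := if x == a then b else if x == b then a else x.
Lemma swK a b : involutive (sw a b).
Proof.
move=> x; rewrite /sw.
have [->|xa] := eqVneq x a.
  by have [->|ba] := eqVneq b a; rewrite ?eqxx.
have [->|xb] := eqVneq x b; first by rewrite ?eqxx.
by rewrite ?(negbTE xa) ?(negbTE xb).
Qed.
Lemma sw_inj a b : injective (sw a b). Proof. exact: inv_inj (swK a b). Qed.

Definition perm2 (u e x : 'I_k) : 'I_k := sw (sw x0 u km1) e (sw x0 u x).
Lemma perm2_inj u e : injective (perm2 u e).
Proof. by move=> x y /sw_inj /sw_inj. Qed.
Lemma km1_x0 : km1 != x0.
Proof. by apply/eqP => /(congr1 val) /=; have := hk; case: (k) => //= k'; lia. Qed.
Lemma perm2_km1 u e : perm2 u e km1 = e.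
Proof. by rewrite /perm2; set v := sw x0 u km1; rewrite /sw eqxx. Qed.
Lemma perm2_x0 u e : u != e -> perm2 u e x0 = u.
Proof.
move=> ue.
have e1 : sw x0 u x0 = u by rewrite /sw eqxx.
have e2 : u != sw x0 u km1.
  rewrite /sw (negbTE km1_x0); case: (eqVneq km1 u) => [<-|ku].
    by rewrite km1_x0.
  by rewrite eq_sym ku.
rewrite /perm2 e1; move: e2; set v := sw x0 u km1 => e2.
by rewrite /sw (negbTE e2) (negbTE ue).
Qed.

Definition succ (c : 'I_k) : 'I_k := Ordinal (ltn_pmod c.+1 kpos).
Lemma succ_neq c : succ c != c.
Proof.
apply/eqP => /(congr1 val) /=; case: (ltnP c.+1 k) => h.
  by rewrite modn_small //; lia.
have -> : c.+1 = k by have := ltn_ord c; lia.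
by rewrite modnn; have := hk; have := ltn_ord c; lia.
Qed.

Definition wpick (a b : 'I_k) : 'I_k := odflt x0 [pick x | (x != a) && (x != b)].
Lemma wP a b : (wpick a b != a) && (wpick a b != b).
Proof.
rewrite /wpick; case: pickP => [x //|none].
have : #|[set: 'I_k]| <= #|[set a; b]|.
  apply: subset_leq_card; apply/subsetP => x _; rewrite !inE.
  by move: (none x); case: (x == a); case: (x == b).
by rewrite cardsT card_ord cards2; have := hk; case: (a != b) => /=; lia.
Qed.

Section Back.
Variable h : 'I_n -> 'I_m.
Hypothesis hJ : forall i, h i \in Jset nb i.
Hypothesis hinj : injective h.

Definition cp i : 'I_k := odflt x0 [pick c | nb i c == h i].
Lemma cpP i : nb i (cp i) = h i.
Proof.
rewrite /cp; case: pickP => [c /eqP //|none].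
by move: (hJ i) => /imsetP [c _ e]; move: (none c); rewrite e eqxx.
Qed.

Definition gam (g : gadget nb) (s : bool) := if s then gc' g else gc g.
Definition spg (g : gadget nb) (s : bool) := if s then gi' g else gi g.
Definition fl (g : gadget nb) := cp (gi g) == gc g.
Definition fr (g : gadget nb) := cp (gi' g) == gc' g.
Definition endc (g : gadget nb) (s : bool) : 'I_k :=
  if gc g == gc' g then (if fl g (+) s then gc g else succ (gc g))
  else (if fl g then gc g else gc' g).
Definition ucol (g : gadget nb) s : 'I_k :=
  if endc g s == gam g s then wpick (gam g s) (cp (spg g s)) else gam g s.

Lemma not_both (g : gadget nb) : fl g -> fr g -> False.
Proof.
rewrite /fl /fr => /eqP e1 /eqP e2.
have [lt e] := gadP g.
have : h (gi g) = h (gi' g) by rewrite -!cpP e1 e2.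
by move/hinj => e'; move: lt; rewrite e' ltnn.
Qed.

Lemma notforced (g : gadget nb) s : endc g s != gam g s -> cp (spg g s) != gam g s.
Proof.
move=> H; apply/negP => /eqP hf; move: H; apply/negP; rewrite negbK.
case: s hf => /= hf.
  have hfr : fr g by rewrite /fr hf.
  have hfl : fl g = false by apply/negP => /not_both /(_ hfr).
  rewrite /endc /gam hfl /=; case: (eqVneq (gc g) (gc' g)) => [->|_] //.
have hfl : fl g by rewrite /fl hf.
by rewrite /endc /gam hfl /=; case: (eqVneq (gc g) (gc' g)).
Qed.

Lemma u_ne_e g s : ucol g s != endc g s.
Proof.
rewrite /ucol; case: (eqVneq (endc g s) (gam g s)) => [->|ne].
  by case/andP: (wP (gam g s) (cp (spg g s))).
by rewrite eq_sym.
Qed.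

Lemma u_ne_pi g s : ucol g s != cp (spg g s).
Proof.
rewrite /ucol; case: (eqVneq (endc g s) (gam g s)) => [_|ne].
  by case/andP: (wP (gam g s) (cp (spg g s))).
by rewrite eq_sym notforced.
Qed.

Lemma gam_in g s : gam g s = ucol g s \/ gam g s = endc g s.
Proof.
rewrite /ucol; case: (eqVneq (endc g s) (gam g s)) => [->|ne]; by [right | left].
Qed.

Definition col (x : raw_t nb) : 'I_k :=
  match x with
  | inl (inl i) => cp i
  | inl (inr (g, s, a)) => perm2 (ucol g s) (endc g s) a
  | inr (inl p) => pre_col p
  | inr (inr t) => Ordinal (ltn_pmod t kpos)
  end.

Lemma col_rep x : col (rep sigma x) = col x.
Proof.
case: x => [[i|[[g [|]] a]]|[p|t]] //=.
  case: ifP => // /andP [ne /eqP ea] /=.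
  have -> : a = km1 by apply: val_inj.
  rewrite !perm2_km1 /endc (negbTE ne) //.
apply: val_inj => /=; by rewrite smod modn_small ?ltn_ord.
Qed.

Lemma col_edge a b : rawE0 a b -> col a != col b.
Proof.
case: a => [[i|[[g s] a]]|[[g s]|t]]; case: b => [[i'|[[g2 s2] b]]|[[g2 s2]|t']] //=.
- move=> /andP [/eqP b0 /eqP ->]; have -> : b = x0 by apply: val_inj.
  rewrite perm2_x0 ?u_ne_e // eq_sym; exact: u_ne_pi.
- move=> /andP [/eqP <- /orP [/andP [/eqP <- ab] | /and4P [ss e /eqP a1 /eqP b1]]].
    by apply: contra ab => /eqP /perm2_inj ->.
  have -> : a = km1 by apply: val_inj.
  have -> : b = km1 by apply: val_inj.
  rewrite !perm2_km1 /endc e.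
  case: s s2 ss => [] [] // _; case: (fl g) => /=; rewrite ?succ_neq // eq_sym succ_neq //.
- move=> /and4P [/eqP <- /eqP <- b0 b1].
  change (gam g s != perm2 (ucol g s) (endc g s) b).
  case: (gam_in g s) => ->.
    rewrite -{1}(perm2_x0 (u_ne_e g s)); apply/eqP => /perm2_inj eb.
    by move: b0; rewrite -eb.
  rewrite -{1}(perm2_km1 (ucol g s) (endc g s)); apply/eqP => /perm2_inj eb.
  by move: b1; rewrite -eb ltnn.
- move=> /andP [tt /existsP [s' /and3P [_ h1 h2]]]; apply/eqP => /(congr1 val) /= e.
  case: (ltngtP t t') => [lt|gt|eq].
  - by move: e; apply/eqP; apply: mod_close => //; lia.
  - by move: e; apply/eqP; rewrite eq_sym; apply: mod_close => //; lia.
  - by move: tt; rewrite (val_inj eq) eqxx.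
Qed.

Lemma back_col : G_colourable sigma.
Proof.
exists col => x y _ _ /existsP [a /existsP [b /and3P [hab /eqP ha /eqP hb]]].
rewrite -ha -hb !col_rep; case/orP: hab => [/col_edge //|/col_edge]; by rewrite eq_sym.
Qed.

End Back.

Section Fwd.
Variable f : raw_t nb -> 'I_k.
Hypothesis fcol : forall x y, x \in GV sigma -> y \in GV sigma -> Gadj sigma x y -> f x != f y.

Definition F a := f (rep sigma a).

Lemma Fedge a b : rawE a b -> F a != F b.
Proof.
move=> hab; apply: fcol; try by apply: imset_f.
by apply/existsP; exists a; apply/existsP; exists b; rewrite hab !eqxx.
Qed.

Lemma Fedge0 a b : rawE0 a b -> F a != F b.
Proof. by move=> h; apply: Fedge; rewrite /rawE h. Qed.

Section Chain.
Variable t0 : 'I_(zM nb).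
Hypothesis kz : k <= zM nb.

Definition Z (u : nat) := F (zv (insubd t0 u)).

Lemma vI u : u < zM nb -> val (insubd t0 u) = u.
Proof. by move=> h; rewrite val_insubd h. Qed.

Lemma Zadj s u v : s + k <= zM nb -> s <= u < s + k -> s <= v < s + k -> u != v -> Z u != Z v.
Proof.
move=> hs hu hv uv; apply: Fedge0 => /=; apply/andP; split.
  apply: contra uv => /eqP /(congr1 val); rewrite !vI; [by move=> -> | lia | lia].
apply/existsP; exists (insubd t0 s); rewrite !vI; [|lia|lia|lia].
apply/and3P; split; lia.
Qed.

Lemma ltk1 (j : 'I_k.-1) : (j : nat) < k - 1.
Proof. by rewrite subn1 ltn_ord. Qed.

Lemma Zstep t : t + k < zM nb -> Z t = Z (t + k).
Proof.
move=> ht.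
set S := [set Z (t + 1 + j) | j : 'I_k.-1].
have injS : injective (fun j : 'I_k.-1 => Z (t + 1 + j)).
  move=> j j' e; apply: val_inj; apply/eqP; apply/negPn/negP => ne; move: e; apply/eqP.
  apply: (Zadj (s := t + 1)); have ne' : (j : nat) != j' by []; have := ltk1 j; have := ltk1 j'; lia.
have cS : #|S| = k.-1 by rewrite card_imset // card_ord.
have h1 : Z t \notin S.
  apply/imsetP => [[j _ e]]; move: e; apply/eqP.
  apply: (Zadj (s := t)); have := ltk1 j; lia.
have h2 : Z (t + k) \notin S.
  apply/imsetP => [[j _ e]]; move: e; apply/eqP.
  apply: (Zadj (s := t + 1)); have := ltk1 j; lia.
apply/eqP; apply/negPn/negP => ne.
have := max_card (Z t |: (Z (t + k) |: S)).
rewrite card_ord cardsU1 cardsU1 in_setU1 (negbTE ne) (negbTE h1) h2 cS /=.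
have := hk; lia.
Qed.

Lemma Zper q r : r + q * k < zM nb -> Z r = Z (r + q * k).
Proof.
elim: q => [|q IH] h; first by rewrite mul0n addn0.
rewrite IH; last by move: h; rewrite mulSn; lia.
rewrite Zstep; last by move: h; rewrite mulSn; lia.
congr (Z _); rewrite mulSn; lia.
Qed.

Lemma Zmod (t : 'I_(zM nb)) : F (zv t) = Z (t %% k).
Proof.
have -> : F (zv t) = Z t by rewrite /Z; congr (F (zv _)); apply: val_inj; rewrite vI.
rewrite (@Zper (t %/ k) (t %% k)); first by rewrite addnC -divn_eq.
by rewrite addnC -divn_eq ltn_ord.
Qed.

Lemma Fpv p : F (pv p) = Z (pre_col p).
Proof.
have -> : F (pv p) = F (zv (sigma p)) by [].
by rewrite Zmod smod modn_small ?ltn_ord.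
Qed.

Lemma Zinj : injective (fun c : 'I_k => Z c).
Proof.
move=> c c' e; apply/eqP; apply/negPn/negP => ne; move: e; apply/eqP.
apply: (Zadj (s := 0)); have := ltn_ord c; have := ltn_ord c'; try lia.
by rewrite (inj_eq val_inj).
Qed.

Lemma Zsurj col : exists c : 'I_k, Z c = col.
Proof. have [g _ gK] := injF_bij Zinj; by exists (g col); rewrite gK. Qed.

End Chain.

Lemma side (g : gadget nb) s : F (pig (spg g s)) = F (pv (g, s)) -> F (lr g s km1) = F (pv (g, s)).
Proof.
move=> hp.
have Linj : injective (fun j => F (lr g s j)).
  move=> j j' e; apply/eqP; apply/negPn/negP => ne; move: e; apply/eqP; apply: Fedge0 => /=.
  by rewrite !eqxx ne.
have [inv _ invK] := injF_bij Linj.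
set j := inv (F (pv (g,s))).
have hj : F (lr g s j) = F (pv (g,s)) := invK _.
suff -> : km1 = j by [].
apply/eqP; apply/negPn/negP => ne.
case: (eqVneq (val j) 0) => [j0|jn0].
  have : F (pig (spg g s)) != F (lr g s j) by apply: Fedge0 => /=; rewrite j0 /spg !eqxx.
  by rewrite hp hj eqxx.
have hjk : (j : nat) != k.-1.
  by apply: contra ne => /eqP e; apply/eqP; apply: val_inj => /=; rewrite e.
have : F (pv (g,s)) != F (lr g s j).
  apply: Fedge0 => /=; rewrite !eqxx /=; apply/andP; split; first by have jn0' : (j:nat) != 0 := jn0; lia.
  move: hjk; have := ltn_ord j; rewrite -subn1; lia.
by rewrite hj eqxx.
Qed.

Lemma gad_contra (g : gadget nb) t0 : k <= zM nb ->
  F (pig (gi g)) = Z t0 (gc g) -> F (pig (gi' g)) = Z t0 (gc' g) -> False.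
Proof.
move=> kz hl hr.
have efl : F (pv (g, false)) = Z t0 (gc g) by apply: Fpv.
have efr : F (pv (g, true)) = Z t0 (gc' g) by apply: Fpv.
have el : F (lr g false km1) = Z t0 (gc g).
  by rewrite -efl; apply: side; rewrite efl; exact: hl.
have er : F (lr g true km1) = Z t0 (gc' g).
  by rewrite -efr; apply: side; rewrite efr; exact: hr.
case: (eqVneq (gc g) (gc' g)) => [e|ne].
  have : F (lr g false km1) != F (lr g true km1).
    by apply: Fedge0 => /=; rewrite !eqxx e eqxx.
  by rewrite el er e eqxx.
have : F (lr g true km1) = F (lr g false km1) by rewrite /F /= ne eqxx.
rewrite el er => /(Zinj kz) e'.
by move: ne; rewrite e' eqxx.
Qed.

End Fwd.


Lemma fwd : G_colourable sigma -> php_map nb.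
Proof.
move=> [f fcol].
pose cc i := odflt x0 [pick c : 'I_k | [exists t : 'I_(zM nb),
                 (val t == val c) && (F f (zv t) == F f (pig i))]].
exists (fun i => nb i (cc i)); split; first by move=> i; apply: imset_f.
have key : forall i i' : 'I_n, i < i' -> nb i (cc i) = nb i' (cc i') -> False.
  move=> i i' lt e.
  have hp : gad_pred nb ((i, cc i), (i', cc i')) by rewrite /gad_pred /= lt e eqxx.
  pose g : gadget nb := exist (gad_pred nb) _ hp.
  pose t0 := sigma (g, false).
  have kz : k <= zM nb.
    have : 0 < #|{: pre_t nb}| by apply/card_gt0P; exists (g, false).
    by rewrite /zM; apply: leq_pmulr.
  have hcc : forall j, F f (pig j) = Z f t0 (cc j).
    move=> j; rewrite /cc; case: pickP => [c /existsP [t /andP [/eqP tc /eqP ft]]|none].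
      rewrite /= -ft /Z; congr (F f (zv _)); apply: val_inj.
      by rewrite vI ?tc // (leq_trans (ltn_ord c) kz).
    have [c hc] := Zsurj fcol t0 kz (F f (pig j)).
    have : [exists t : 'I_(zM nb), (val t == val c) && (F f (zv t) == F f (pig j))].
      apply/existsP; exists (insubd t0 c); rewrite vI ?eqxx /=; last exact: (leq_trans (ltn_ord c) kz).
      by rewrite -hc /Z eqxx.
    by rewrite (none c).
  by apply: (gad_contra fcol (g := g) (t0 := t0) kz); rewrite hcc.
move=> i i' e; case: (ltngtP i i') => [lt|gt|eq].
- by case: (key _ _ lt e).
- by case: (key _ _ gt (esym e)).
- exact: val_inj.
Qed.

End Main.

Unset Implicit Arguments.

Theorem proposition3p4 (d : nat) :
  exists C : nat,
  forall (k n m : nat) (nb : 'I_n -> 'I_k -> 'I_m),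
    3 <= k ->
    (forall i, injective (nb i)) ->
    (forall j : 'I_m, #|[set i | j \in Jset nb i]| <= d * k) ->
    forall sigma : pre_t nb -> 'I_(zM nb),
      injective sigma ->
      (forall p, val (sigma p) = val (pre_col p) %[mod k]) ->
      [/\ #|GV sigma| <= C * k ^ 4 * n,
          (forall x, x \in GV sigma -> Gdeg sigma x <= C * k ^ 2),
          G_colourable sigma <-> php_map nb
        & G_colourable sigma <-> php_eqs nb].
Proof.
exists (6 * d + 7) => k n m nb hk nbinj hdeg sigma sinj smod.
have e1 : G_colourable sigma <-> php_map nb.
  split; first exact: (fwd hk smod).
  move=> [h [hJ hinj]]; exact: (back_col hk smod hJ hinj).
split => //.
- exact: (card_GV hk nbinj hdeg).
- move=> x _; exact: (Gdeg_le hk nbinj hdeg sinj).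
- by rewrite e1; exact: (map_eqs nb hk).
Qed.
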